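(* Let $P\in\mathbb{C}[z_1,\dots,z_d]$. Then for every integer $s\ge1$, \[ \|P^s\|_a\ge\|P\|_a^s . \]
   Context: For multi-indices $\alpha\in\mathbb{N}^d$ write $z^\alpha=z_1^{\alpha_1}\cdots z_d^{\alpha_d}$ and $\alpha!=\alpha_1!\cdots\alpha_d!$. The apolar inner product on $\mathbb{C}[z_1,\dots,z_d]$ is $\langle \sum c_\alpha z^\alpha,\sum d_\alpha z^\alpha\rangle_a=\sum_\alpha\alpha!\,c_\alpha\overline{d_\alpha}$, with norm $\|P\|_a=\sqrt{\langle P,P\rangle_a}$. *)

(* Defs.v *)
From HB Require Import structures.
From mathcomp Require Import all_boot all_order all_algebra.
From mathcomp Require Import complex.
From mathcomp Require Import mpoly.
From mathcomp Require Import reals.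
Set Implicit Arguments. Unset Strict Implicit. Unset Printing Implicit Defensive.
Import Order.TTheory GRing.Theory Num.Theory.
Local Open Scope ring_scope.

Definition mfact (d : nat) (m : 'X_{1..d}) : nat := (\prod_(i < d) (m i)`!)%N.

Definition cabs2 (R : realType) (c : R[i]) : R := (@complex.Re R c) ^+ 2 + (@complex.Im R c) ^+ 2.

Definition apolar_sqnorm (R : realType) (d : nat) (P : {mpoly R[i][d]}) : R :=
  \sum_(m <- msupp P) (mfact m)%:R * cabs2 (P@_m).

Definition apolar_norm (R : realType) (d : nat) (P : {mpoly R[i][d]}) : R :=
  Num.sqrt (apolar_sqnorm P).

(* Main.v *)
Require Import Defs.
From HB Require Import structures.
From mathcomp Require Import all_boot all_order all_algebra.
From mathcomp Require Import complex.
From mathcomp Require Import mpoly.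
From mathcomp Require Import reals.
From mathcomp Require Import zify ring lra.
Set Implicit Arguments. Unset Strict Implicit. Unset Printing Implicit Defensive.
Import Order.TTheory GRing.Theory Num.Theory.
Local Open Scope ring_scope.
Section OneD.
Variables (R : rcfType) (N : nat).
Local Notation C := (R[i]).

Lemma sum_delta (F : nat -> C) x : (x < N)%N ->
  \sum_(t < N) ((x == t)%N)%:R * F t = F x.
Proof.
move=> hx; rewrite (bigD1 (Ordinal hx)) //= eqxx mul1r big1 ?addr0 //.
move=> t /eqP ht; case: eqP => [e|]; last by rewrite mul0r.
by case: ht; apply: val_inj; rewrite /= e.
Qed.

Lemma natb0 (b : bool) : b = false -> (b%:R : C) = 0. Proof. by move->. Qed.
Lemma natb1 (b : bool) : b = true -> (b%:R : C) = 1. Proof. by move->. Qed.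

Lemma factC_neq0 n : (n`!)%:R != 0 :> C.
Proof. by rewrite pnatr_eq0 -lt0n fact_gt0. Qed.

Definition W1 (s t A E : nat) : C :=
  \sum_(r < N) ((r + s == A)%N)%:R * ((r + t == E)%N)%:R *
     ((A`!)%:R / (r`!)%:R) * ((E`!)%:R / (t`!)%:R).

Lemma W1E s t A E : (A < N)%N ->
  W1 s t A E = ((s <= A)%N)%:R * ((A - s + t == E)%N)%:R *
     ((A`!)%:R / ((A - s)`!)%:R) * ((E`!)%:R / (t`!)%:R).
Proof.
move=> hA; rewrite /W1.
have [hs|hs] := leqP s A.
  have h : (A - s < N)%N by apply: leq_ltn_trans (leq_subr _ _) hA.
  rewrite (_ : (true%:R : C) = 1) // mul1r -(sum_delta (fun r => ((r + t == E)%N)%:R *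
     ((A`!)%:R / (r`!)%:R) * ((E`!)%:R / (t`!)%:R)) h).
  apply: eq_bigr => r _; rewrite -!mulrA; congr (_ * _).
  rewrite (_ : (r + s == A)%N = (A - s == r)%N) //.
  by apply/eqP/eqP => [<-|<-]; rewrite ?addnK ?subnK.
rewrite (_ : (false%:R : C) = 0) // !mul0r; apply: big1 => r _.
have -> : (r + s == A)%N = false.
  by apply/negbTE; rewrite neq_ltn; apply/orP; right; apply: (leq_trans hs); rewrite leq_addl.
by rewrite !mul0r.
Qed.

Definition K1 c e c' e' : C :=
  \sum_(z < N) (z`!)%:R * (((c + e == z)%N)%:R * ((c' + e' == z)%N)%:R).

Lemma K1E c e c' e' : (c + e < N)%N ->
  K1 c e c' e' = ((c + e == c' + e')%N)%:R * ((c + e)`!)%:R.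
Proof.
move=> h; transitivity (((c + e)`!)%:R * ((c' + e' == c + e)%N)%:R : C).
  rewrite /K1 -(sum_delta (fun z => (z`!)%:R * ((c' + e' == z)%N)%:R) h).
  by apply: eq_bigr => z _; rewrite mulrCA.
by rewrite mulrC eq_sym.
Qed.

Definition K2 c' e c e' : C :=
  \sum_(s < N) \sum_(t < N) ((s`!)%:R)^-1 * (t`!)%:R * (W1 s t c' e * W1 s t c e').

Lemma binC_fact n k : (k <= n)%N ->
  (n`!)%:R = ('C(n, k))%:R * (k`!)%:R * ((n - k)`!)%:R :> C.
Proof. by move=> h; rewrite -!natrM -mulnA bin_fact. Qed.

Lemma K2_term c' e c e' s : (c < N)%N -> (c' < N)%N -> (e < N)%N ->
  \sum_(t < N) ((s`!)%:R)^-1 * (t`!)%:R * (W1 s t c' e * W1 s t c e') =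
  ((c + e == c' + e')%N)%:R * ((c'`!)%:R * (e'`!)%:R) *
  (((s <= c')%N)%:R * ('C(c, s) * 'C(e, c' - s))%:R) :> C.
Proof.
move=> hc hc' he.
have F0 : (false%:R : C) = 0 by [].
have T1 : (true%:R : C) = 1 by [].
under eq_bigr => t _ do rewrite !W1E //.
have [hs|hs] := leqP s c'; last first.
  by rewrite F0 !mul0r mulr0 big1 // => t _; rewrite !mul0r mulr0.
rewrite T1 mul1r.
have [hse|hse] := leqP (c' - s) e; last first.
  rewrite (bin_small hse) muln0 mulr0 big1 // => t _.
  by rewrite (@natb0 (c' - s + t == e)%N) ?mulr0 ?mul0r ?mulr0 //; apply/eqP; lia.
have ht0 : (e - (c' - s) < N)%N by apply: leq_ltn_trans (leq_subr _ _) he.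
pose t0 := (e - (c' - s))%N.
pose F := fun t : nat => ((s`!)%:R)^-1 * (t`!)%:R *
  (((c'`!)%:R / ((c' - s)`!)%:R) * ((e`!)%:R / (t`!)%:R) *
   (((s <= c)%N)%:R * ((c - s + t == e')%N)%:R * ((c`!)%:R / ((c - s)`!)%:R) * ((e'`!)%:R / (t`!)%:R))) : C.
transitivity (\sum_(t < N) ((t0 == t)%N)%:R * F t).
  apply: eq_bigr => t _; rewrite /F mul1r.
  rewrite (_ : (c' - s + t == e)%N = (t0 == t)%N); last by apply/eqP/eqP; lia.
  by ring.
rewrite (sum_delta F ht0) /F.
have [hsc|hsc] : (s <= c)%N \/ (c < s)%N by case: leqP; auto.
  2:{ rewrite (@natb0 (s <= c)%N); last by apply/negbTE; rewrite -ltnNge.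
  by rewrite (bin_small hsc) !mul0r !mulr0. }
rewrite (@natb1 (s <= c)%N) // mul1r.
rewrite (_ : (c - s + t0 == e')%N = (c + e == c' + e')%N); last by apply/eqP/eqP; rewrite /t0; lia.
have [heq|hne] : (c + e == c' + e')%N \/ ~~ (c + e == c' + e')%N by case: (c + e == c' + e')%N; auto.
  2:{
  by rewrite (natb0 (negbTE hne)) !mul0r !mulr0. }
rewrite (natb1 heq) !mul1r.
rewrite (binC_fact hsc) (binC_fact hse) -/t0 !natrM.
by field; rewrite !factC_neq0.
Qed.

Lemma K2E c' e c e' : (c + e < N)%N -> (c' + e' < N)%N ->
  K2 c' e c e' = ((c + e == c' + e')%N)%:R * ((c + e)`!)%:R.
Proof.
move=> h1 h2.
have hc : (c < N)%N by lia.
have hc' : (c' < N)%N by lia.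
have he : (e < N)%N by lia.
rewrite /K2; under eq_bigr => s _ do rewrite K2_term //.
rewrite -mulr_sumr.
rewrite (eq_bigr (fun s : 'I_N => if (s < c'.+1)%N then ('C(c, s) * 'C(e, c' - s))%:R else 0 : C));
  last by move=> s _; rewrite ltnS; case: (s <= c')%N; [exact: mul1r | exact: mul0r].
rewrite -big_mkcond /= -(big_ord_widen N (fun s => ('C(c, s) * 'C(e, c' - s))%:R : C)); last by lia.
rewrite -natr_sum binomial.Vandermonde.
have [heq|hne] : (c + e == c' + e')%N \/ ~~ (c + e == c' + e')%N by case: (c + e == c' + e')%N; auto.
  2:{ by rewrite (natb0 (negbTE hne)) !mul0r. }
rewrite (natb1 heq) !mul1r -!natrM; congr (_%:R).
have -> : e' = (c + e - c')%N by move/eqP: heq; lia.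
by rewrite mulnC bin_fact //; move/eqP: heq; lia.
Qed.
End OneD.

Section Box.
Variables (R : rcfType) (d N : nat).
Local Notation C := (R[i]).
Local Notation I := {ffun 'I_d -> 'I_N}.

Definition pl (x y z : I) : C := \prod_i ((x i + y i == z i)%N)%:R.
Definition fx (x : I) : C := \prod_i ((x i)`!)%:R.
Definition conv (p u : I -> C) (z : I) : C := \sum_x \sum_y pl x y z * (p x * u y).
Definition w (al e A E : I) : C :=
  \sum_a pl a al A * pl a e E * (fx A / fx a) * (fx E / fx e).
Definition T (al : I) (p u : I -> C) (e : I) : C :=
  \sum_A \sum_E w al e A E * (conjc (p A) * u E).
Definition nrm (u : I -> C) : C := \sum_x fx x * (u x * conjc (u x)).
Definition ip (u v : I -> C) : C := \sum_x fx x * (u x * conjc (v x)).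

Lemma cjM (x y : C) : conjc (x * y) = conjc x * conjc y. Proof. exact: rmorphM. Qed.
Lemma cjV (x : C) : conjc (x^-1) = (conjc x)^-1. Proof. exact: fmorphV. Qed.
Lemma cjB (x y : C) : conjc (x - y) = conjc x - conjc y. Proof. exact: rmorphB. Qed.
Lemma cjS (J : Type) (r : seq J) (P : pred J) (F : J -> C) :
  conjc (\sum_(i <- r | P i) F i) = \sum_(i <- r | P i) conjc (F i).
Proof. exact: rmorph_sum. Qed.
Lemma cjP (J : Type) (r : seq J) (P : pred J) (F : J -> C) :
  conjc (\prod_(i <- r | P i) F i) = \prod_(i <- r | P i) conjc (F i).
Proof. exact: rmorph_prod. Qed.
Lemma cjn n : conjc (n%:R : C) = n%:R. Proof. exact: rmorph_nat. Qed.
Lemma cjK (x : C) : conjc (conjc x) = x. Proof. exact: conjcK. Qed.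

Lemma conj_pl x y z : conjc (pl x y z) = pl x y z.
Proof. by rewrite cjP; apply: eq_bigr => i _; rewrite cjn. Qed.
Lemma conj_fx x : conjc (fx x) = fx x.
Proof. by rewrite cjP; apply: eq_bigr => i _; rewrite cjn. Qed.
Lemma fx_neq0 x : fx x != 0.
Proof. by rewrite prodf_seq_neq0; apply/allP => i _; rewrite factC_neq0. Qed.
Lemma conj_w al e A E : conjc (w al e A E) = w al e A E.
Proof.
rewrite cjS; apply: eq_bigr => a _.
by rewrite !cjM !cjV !conj_pl !conj_fx.
Qed.

Lemma w_prod al e A E : w al e A E = \prod_i W1 R N (al i) (e i) (A i) (E i).
Proof.
rewrite /W1 bigA_distr_bigA; apply: eq_bigr => a _.
rewrite /pl /fx !big_split /= -!prodfV.
by [].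
Qed.


Definition Ks1 (c1 e1 c2 e2 : I) : C := \sum_z fx z * (pl c1 e1 z * pl c2 e2 z).
Definition Ks2 (A E A' E' : I) : C :=
  \sum_al \sum_e (fx al)^-1 * fx e * (w al e A E * w al e A' E').

Lemma Ks1_prod c1 e1 c2 e2 : Ks1 c1 e1 c2 e2 = \prod_i K1 R N (c1 i) (e1 i) (c2 i) (e2 i).
Proof.
rewrite /K1 bigA_distr_bigA; apply: eq_bigr => z _.
by rewrite /pl /fx !big_split.
Qed.

Lemma Ks2_prod A E A' E' : Ks2 A E A' E' = \prod_i K2 R N (A i) (E i) (A' i) (E' i).
Proof.
rewrite /K2 bigA_distr_bigA; apply: eq_bigr => al _.
rewrite bigA_distr_bigA; apply: eq_bigr => e _.
by rewrite !w_prod /fx !big_split /= -!prodfV.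
Qed.

Lemma Ks_eq (c1 e1 c2 e2 : I) : (forall i, c1 i + e1 i < N)%N -> (forall i, c2 i + e2 i < N)%N ->
  Ks1 c1 e1 c2 e2 = Ks2 c2 e1 c1 e2.
Proof.
move=> h1 h2; rewrite Ks1_prod Ks2_prod; apply: eq_bigr => i _.
by rewrite K1E // K2E.
Qed.

Lemma cj0 : conjc (0 : C) = 0. Proof. exact: rmorph0. Qed.

Lemma sum_prod_pair (F G : I -> I -> C) :
  (\sum_x \sum_y F x y) * (\sum_x \sum_y G x y) =
  \sum_(q : (I * I) * (I * I)) F q.1.1 q.1.2 * G q.2.1 q.2.2.
Proof.
rewrite !pair_bigA /= mulr_suml.
rewrite -(pair_bigA _ (fun (a b : I * I) => F a.1 a.2 * G b.1 b.2)) /=; apply: eq_bigr => i _.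
by rewrite mulr_sumr.
Qed.

Lemma LHS_exp (p u : I -> C) : nrm (conv p u) =
  \sum_(q : (I * I) * (I * I)) (p q.1.1 * u q.1.2 * (conjc (p q.2.1) * conjc (u q.2.2))) *
     Ks1 q.1.1 q.1.2 q.2.1 q.2.2.
Proof.
rewrite /nrm /conv.
have cconv : forall z, conjc (\sum_x \sum_y pl x y z * (p x * u y)) =
   \sum_x \sum_y pl x y z * (conjc (p x) * conjc (u y)).
  move=> z; rewrite cjS; apply: eq_bigr => x _; rewrite cjS; apply: eq_bigr => y _.
  by rewrite !cjM conj_pl.
transitivity (\sum_z \sum_(q : (I * I) * (I * I)) fx z * ((pl q.1.1 q.1.2 z * (p q.1.1 * u q.1.2)) *
   (pl q.2.1 q.2.2 z * (conjc (p q.2.1) * conjc (u q.2.2))))).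
  by apply: eq_bigr => z _; rewrite cconv sum_prod_pair mulr_sumr.
rewrite exchange_big; apply: eq_bigr => q _; rewrite /Ks1 mulr_sumr; apply: eq_bigr => z _.
ring.
Qed.

Lemma RHS_exp (p u : I -> C) : \sum_al (fx al)^-1 * nrm (T al p u) =
  \sum_(q : (I * I) * (I * I)) (conjc (p q.1.1) * u q.1.2 * (p q.2.1 * conjc (u q.2.2))) *
     Ks2 q.1.1 q.1.2 q.2.1 q.2.2.
Proof.
rewrite /nrm /T.
have cT : forall al e, conjc (\sum_A \sum_E w al e A E * (conjc (p A) * u E)) =
   \sum_A \sum_E w al e A E * (p A * conjc (u E)).
  move=> al e; rewrite cjS; apply: eq_bigr => x _; rewrite cjS; apply: eq_bigr => y _.
  by rewrite !cjM conj_w cjK.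
transitivity (\sum_al \sum_e \sum_(q : (I * I) * (I * I)) (fx al)^-1 * (fx e *
   ((w al e q.1.1 q.1.2 * (conjc (p q.1.1) * u q.1.2)) *
   (w al e q.2.1 q.2.2 * (p q.2.1 * conjc (u q.2.2)))))).
  apply: eq_bigr => al _; rewrite mulr_sumr; apply: eq_bigr => e _.
  by rewrite cT sum_prod_pair !mulr_sumr.
transitivity (\sum_al \sum_(q : (I * I) * (I * I)) \sum_e (fx al)^-1 * (fx e *
   ((w al e q.1.1 q.1.2 * (conjc (p q.1.1) * u q.1.2)) *
   (w al e q.2.1 q.2.2 * (p q.2.1 * conjc (u q.2.2)))))).
  by apply: eq_bigr => al _; rewrite exchange_big.
rewrite exchange_big; apply: eq_bigr => q _; rewrite /Ks2 mulr_sumr; apply: eq_bigr => al _.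
rewrite mulr_sumr; apply: eq_bigr => e _.
ring.
Qed.

Definition swapq (q : (I * I) * (I * I)) : (I * I) * (I * I) := ((q.2.1, q.1.2), (q.1.1, q.2.2)).
Lemma swapqK : involutive swapq. Proof. by case=> [[a b] [c e]]. Qed.

Lemma SOS (p u : I -> C) :
  (forall c1 e1, p c1 != 0 -> u e1 != 0 -> forall i, (c1 i + e1 i < N)%N) ->
  nrm (conv p u) = \sum_al (fx al)^-1 * nrm (T al p u).
Proof.
move=> H; rewrite LHS_exp RHS_exp (reindex_inj (inv_inj swapqK)).
apply: eq_bigr => [[[c1 e1] [c2 e2]]] _ /=.
have [->|h1] := eqVneq (p c1) 0; first by rewrite cj0; ring.
have [->|h2] := eqVneq (u e1) 0; first by ring.
have [->|h3] := eqVneq (p c2) 0; first by ring.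
have [->|h4] := eqVneq (u e2) 0; first by rewrite cj0; ring.
rewrite (Ks_eq (H _ _ h3 h2) (H _ _ h1 h4)).
ring.
Qed.

Lemma pl0 (al0 : I) (h : forall i, al0 i = 0 :> nat) a A : pl a al0 A = (a == A)%:R.
Proof.
case: (eqVneq a A) => [->|ne].
  by rewrite /pl big1 // => i _; rewrite h addn0 eqxx.
have /existsP [i hi] : [exists i, a i != A i].
  apply: contraR ne; rewrite negb_exists => /forallP hh.
  by apply/eqP/ffunP => i; apply/eqP; move: (hh i); rewrite negbK.
rewrite /pl (bigD1 i) //= (@natb0 R (a i + al0 i == A i)%N) ?mul0r //.
by rewrite h addn0; apply: negbTE.
Qed.

Lemma w0 (al0 : I) (h : forall i, al0 i = 0 :> nat) e A E :
  w al0 e A E = pl A e E * (fx E / fx e).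
Proof.
rewrite /w (bigD1 A) //= big1 ?addr0.
  by rewrite pl0 // eqxx mul1r divff ?fx_neq0 // mulr1.
by move=> a ne; rewrite pl0 // (negbTE ne) !mul0r.
Qed.

Lemma ip_adj (al0 : I) (h : forall i, al0 i = 0 :> nat) (p u v : I -> C) :
  ip (conv p u) v = ip u (T al0 p v).
Proof.
rewrite /ip /conv /T.
pose F := fun x y z => pl x y z * fx z * (p x * u y * conjc (v z)).
transitivity (\sum_z \sum_x \sum_y F x y z).
  apply: eq_bigr => z _; rewrite mulr_suml mulr_sumr; apply: eq_bigr => x _.
  rewrite mulr_suml mulr_sumr; apply: eq_bigr => y _; rewrite /F; ring.
transitivity (\sum_y \sum_x \sum_z F x y z); last first.
  apply: eq_bigr => y _; rewrite cjS mulr_sumr mulr_sumr; apply: eq_bigr => x _.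
  rewrite cjS mulr_sumr mulr_sumr; apply: eq_bigr => z _.
  rewrite /F w0 // !cjM cjK !cjV conj_pl !conj_fx.
  by field; apply: fx_neq0.
rewrite exchange_big.
rewrite (eq_bigr (fun x => \sum_y \sum_z F x y z)); last by move=> x _; rewrite exchange_big.
by rewrite exchange_big.
Qed.

Lemma fx_ge0 x : 0 <= fx x.
Proof. by apply: prodr_ge0 => i _; apply: ler0n. Qed.

Lemma nrm_ge0 u : 0 <= nrm u.
Proof. by apply: sumr_ge0 => x _; apply: mulr_ge0; [exact: fx_ge0 | exact: mulcJ_ge0]. Qed.

Lemma ip_conj u v : conjc (ip u v) = ip v u.
Proof.
rewrite /ip cjS; apply: eq_bigr => x _.
rewrite !cjM conj_fx cjK; ring.
Qed.

Lemma nrm_comb (al be : C) u t : conjc al = al -> conjc be = be ->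
  nrm (fun x => al * u x - be * t x) =
  al * al * nrm u - al * be * (ip u t + ip t u) + be * be * nrm t.
Proof.
move=> ha hb; rewrite /nrm /ip.
rewrite mulrDr opprD !mulr_sumr -!sumrN -!big_split /=.
apply: eq_bigr => x _; rewrite cjB !cjM ha hb; ring.
Qed.

Lemma ge0_real (x : C) : 0 <= x -> x = ((@complex.Re R x)%:C)%C.
Proof. move=> h; have := ger0_Im h; case: x h => a b h /= ->; done. Qed.

Lemma rcM (x y : R) : ((x * y)%:C)%C = (x%:C)%C * (y%:C)%C :> C. Proof. exact: rmorphM. Qed.
Lemma rcD (x y : R) : ((x + y)%:C)%C = (x%:C)%C + (y%:C)%C :> C. Proof. exact: rmorphD. Qed.
Lemma rcB (x y : R) : ((x - y)%:C)%C = (x%:C)%C - (y%:C)%C :> C. Proof. exact: rmorphB. Qed.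

Lemma fx0 (al0 : I) (h : forall i, al0 i = 0 :> nat) : fx al0 = 1.
Proof. by rewrite /fx big1 // => i _; rewrite h. Qed.

Lemma logconvex (al0 : I) (h0 : forall i, al0 i = 0 :> nat) (p u v w' : I -> C) (a b c : R) :
  (forall c1 e1, p c1 != 0 -> v e1 != 0 -> forall i, (c1 i + e1 i < N)%N) ->
  (forall z, v z = conv p u z) -> (forall z, w' z = conv p v z) ->
  nrm u = (a%:C)%C -> nrm v = (b%:C)%C -> nrm w' = (c%:C)%C -> 0 < a -> b ^+ 2 <= a * c.
Proof.
move=> H hv hw ha hb hc apos.
pose t := T al0 p v.
have ipb : ip u t = (b%:C)%C.
  rewrite -ip_adj // -hb /ip /nrm; apply: eq_bigr => x _; by rewrite hv.
have ipb' : ip t u = (b%:C)%C by rewrite -ip_conj ipb conjc_real.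
have hnt : nrm t <= (c%:C)%C.
  rewrite -hc.
  have -> : nrm w' = nrm (conv p v) by rewrite /nrm; apply: eq_bigr => x _; rewrite hw.
  rewrite SOS // (bigD1 al0) //= fx0 // invr1 mul1r lerDl.
  apply: sumr_ge0 => al _; apply: mulr_ge0; [by rewrite invr_ge0 fx_ge0 | exact: nrm_ge0].
have hcomb := nrm_ge0 (fun x => (b%:C)%C * u x - (a%:C)%C * t x).
rewrite nrm_comb ?conjc_real // ha ipb ipb' in hcomb.
move: hnt hcomb; rewrite (ge0_real (nrm_ge0 t)).
set nt := complex.Re (nrm t).
rewrite -!rcD -!rcM -rcB -rcD lecR ler0c => hnt hcomb.
nra.
Qed.
End Box.

Section Link.
Variables (R : rcfType) (d N : nat).
Local Notation C := (R[i]).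
Local Notation I := {ffun 'I_d -> 'I_N}.
Local Notation pl := (@pl R d N).
Local Notation fx := (@fx R d N).

Definition emb (x : I) : 'X_{1..d} := [multinom (x i : nat) | i < d].
Lemma embE x i : emb x i = x i. Proof. exact: mnmE. Qed.
Lemma emb_inj : injective emb.
Proof.
move=> x y h; apply/ffunP => i; apply: val_inj.
by rewrite /= -!embE h.
Qed.

Definition coef (Q : {mpoly C[d]}) (x : I) : C := Q@_(emb x).
Definition inbox (Q : {mpoly C[d]}) := forall m, m \in msupp Q -> forall i, (m i < N)%N.

Lemma sum_box (Q : {mpoly C[d]}) (F : 'X_{1..d} -> C) : inbox Q ->
  (forall m, Q@_m = 0 -> F m = 0) ->
  \sum_(m <- msupp Q) F m = \sum_(x : I) F (emb x).
Proof.
move=> hQ hF.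
rewrite -(big_map emb xpredT F).
set s := map emb _.
have us : uniq s by rewrite map_inj_uniq ?index_enum_uniq //; exact: emb_inj.
rewrite [RHS](bigID (mem (msupp Q))) /= [X in _ = _ + X]big1 ?addr0; last first.
  by move=> m /memN_msupp_eq0 /hF.
rewrite -[RHS]big_filter; apply: perm_big; apply: uniq_perm.
- exact: msupp_uniq.
- exact: filter_uniq.
move=> m; rewrite mem_filter /=; apply/idP/andP => [hm|[]//].
split=> //.
pose x : I := [ffun i => Ordinal (hQ m hm i)].
have -> : m = emb x by apply/mnmP => i; rewrite embE ffunE.
by apply: map_f; rewrite mem_index_enum.
Qed.

Lemma prod_natb (b : 'I_d -> bool) : \prod_i ((b i)%:R : C) = ([forall i, b i])%:R.
Proof.
have [h|h] : [forall i, b i] \/ ~~ [forall i, b i] by case: [forall i, b i]; auto.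
  rewrite (natb1 R h); apply: big1 => i _; apply: natb1; exact: (forallP h i).
rewrite (natb0 R (negbTE h)); move: h; rewrite negb_forall => /existsP [i hi].
by rewrite (bigD1 i) //= (natb0 R (negbTE hi)) mul0r.
Qed.

Lemma plE (x y z : I) : pl x y z = (((emb x + emb y)%MM == emb z))%:R.
Proof.
rewrite /pl prod_natb; congr (_%:R); congr (nat_of_bool _); apply/forallP/eqP => [h|h].
  by apply/mnmP => i; rewrite mnmDE !embE; apply/eqP.
by move=> i; rewrite -!embE -mnmDE h.
Qed.

Lemma mulcoef (Q1 Q2 : {mpoly C[d]}) z : inbox Q1 -> inbox Q2 ->
  coef (Q1 * Q2) z = conv (coef Q1) (coef Q2) z.
Proof.
move=> h1 h2; rewrite /coef mpolyME raddf_sum big_allpairs /=.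
rewrite (sum_box (F := fun a => \sum_(b <- msupp Q2) ((Q1@_a * Q2@_b) *: 'X_[a + b])@_(emb z))) //; last first.
  by move=> m hm; apply: big1 => b _; rewrite mcoeffZ hm !mul0r.
apply: eq_bigr => x _.
rewrite (sum_box (F := fun b => ((Q1@_(emb x) * Q2@_b) *: 'X_[emb x + b])@_(emb z))) //; last first.
  by move=> m hm; rewrite mcoeffZ hm mulr0 mul0r.
apply: eq_bigr => y _.
by rewrite mcoeffZ mcoeffX plE mulrC.
Qed.

End Link.

Section Final.
Variables (R : realType) (d : nat).
Local Notation C := (R[i]).

Lemma rcS (J : Type) (r : seq J) (F : J -> R) :
  ((\sum_(i <- r) F i)%:C)%C = \sum_(i <- r) ((F i)%:C)%C :> C.
Proof. exact: rmorph_sum. Qed.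
Lemma rcn n : ((n%:R : R)%:C)%C = n%:R :> C. Proof. exact: rmorph_nat. Qed.

Lemma cabs2C (c : C) : ((cabs2 c)%:C)%C = c * conjc c.
Proof.
case: c => a b; rewrite /cabs2 /=.
apply/eqP; rewrite eq_complex /=; apply/andP; split; apply/eqP; ring.
Qed.

Lemma cabs2_ge0 (c : C) : 0 <= cabs2 c.
Proof. by rewrite /cabs2 addr_ge0 ?sqr_ge0. Qed.

Lemma cabs2_gt0 (c : C) : c != 0 -> 0 < cabs2 c.
Proof.
move=> hc; rewrite lt_def cabs2_ge0 andbT; apply: contra hc.
case: c => a b; rewrite /cabs2 /= paddr_eq0 ?sqr_ge0 // !sqrf_eq0 => /andP [/eqP -> /eqP ->].
by [].
Qed.

Lemma apolar_box N (Q : {mpoly C[d]}) : inbox N Q ->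
  ((apolar_sqnorm Q)%:C)%C = nrm (@coef R d N Q).
Proof.
move=> hQ; rewrite /apolar_sqnorm rcS.
under eq_bigr do rewrite rcM rcn cabs2C.
rewrite (@sum_box R d N Q (fun m => (mfact m)%:R * (Q@_m * conjc Q@_m)) hQ) //; last first.
  by move=> m ->; rewrite mul0r mulr0.
apply: eq_bigr => x _; congr (_ * _).
by rewrite /mfact /fx natr_prod; apply: eq_bigr => i _; rewrite embE.
Qed.

Lemma apolar_ge0 (Q : {mpoly C[d]}) : 0 <= apolar_sqnorm Q.
Proof. by apply: sumr_ge0 => m _; apply: mulr_ge0; [exact: ler0n | exact: cabs2_ge0]. Qed.

Lemma apolar_gt0 (Q : {mpoly C[d]}) : Q != 0 -> 0 < apolar_sqnorm Q.
Proof.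
move=> hQ; rewrite /apolar_sqnorm (bigD1_seq (mlead Q)) ?msupp_uniq ?mlead_supp //=.
apply: ltr_pwDl; last by apply: sumr_ge0 => m _; apply: mulr_ge0; [exact: ler0n | exact: cabs2_ge0].
apply: mulr_gt0; first by rewrite ltr0n /mfact; apply: prodn_gt0 => i; exact: fact_gt0.
by apply: cabs2_gt0; rewrite -mcoeff_msupp mlead_supp.
Qed.

Lemma apolar0 : apolar_sqnorm (0 : {mpoly C[d]}) = 0.
Proof.
have h : msupp (0 : {mpoly C[d]}) = [::] by apply/eqP; rewrite msupp_eq0.
by rewrite /apolar_sqnorm h big_nil.
Qed.

Lemma apolar1 : apolar_sqnorm (1 : {mpoly C[d]}) = 1.
Proof.
rewrite /apolar_sqnorm -mpolyC1 msupp1 big_seq1 mpolyC1 mcoeff1 eqxx /mfact big1.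
  by rewrite mul1r /cabs2 /= expr0n /= addr0 expr1n.
by move=> i _; rewrite mnm0E.
Qed.

Lemma mnm_le_mdeg (m : 'X_{1..d}) i : (m i <= mdeg m)%N.
Proof. by rewrite mdegE (bigD1 i) //= leq_addr. Qed.
End Final.

Theorem theorem5p1 (R : realType) (d : nat) (P : {mpoly R[i][d]}) (s : nat) :
  (1 <= s)%N -> apolar_norm P ^+ s <= apolar_norm (P ^+ s).
Proof.
move=> hs.
have [->|P0] := eqVneq P 0.
  rewrite /apolar_norm apolar0 sqrtr0 expr0n; case: s hs => //= s _; exact: sqrtr_ge0.
pose M := (\sum_(k < s.+2) msize (P ^+ k))%N.
pose N := (M + M).+1.
pose r k := apolar_sqnorm (P ^+ k).
have hM : forall k, (k < s.+2)%N -> forall m, m \in msupp (P ^+ k) -> forall i, (m i < M)%N.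
  clear r.
  move=> k0 hk m hm i; apply: leq_ltn_trans (mnm_le_mdeg m i) _.
  apply: leq_trans (msize_mdeg_lt hm) _.
  by rewrite /M (bigD1 (Ordinal hk)) //= leq_addr.
have inb : forall k, (k < s.+2)%N -> inbox N (P ^+ k).
  by move=> k hk m hm i; have := hM k hk m hm i; rewrite /N; lia.
pose al0 : {ffun 'I_d -> 'I_N} := [ffun _ => ord0].
have h0 : forall i, al0 i = 0 :> nat by move=> i; rewrite ffunE.
have Pk0 : forall k, P ^+ k != 0.
  move=> k; rewrite -mleadc_eq0 mleadcX_proper ?expf_neq0 ?mleadc_eq0 //.
  by apply: mulfI; rewrite mleadc_eq0.
have pos : forall k, 0 < r k by move=> k; apply: apolar_gt0.
have supp : forall k, (k < s.+2)%N -> forall (x : {ffun 'I_d -> 'I_N}), coef (P ^+ k) x != 0 ->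
    forall i, (x i < M)%N.
  move=> k hk x hx i; rewrite -embE; apply: (hM k hk); by rewrite mcoeff_msupp.
have step : forall k, (1 <= k)%N -> (k <= s)%N -> r k ^+ 2 <= r k.-1 * r k.+1.
  move=> k h1 h2.
  apply: (@logconvex R d N al0 h0 (coef (P ^+ 1)) (coef (P ^+ k.-1)) (coef (P ^+ k)) (coef (P ^+ k.+1))).
  - move=> c1 e1 hc1 he1 i.
    have hk2 : (k < s.+2)%N by lia.
    have := supp 1%N isT c1 hc1 i; have := supp k hk2 e1 he1 i.
    by move=> ha hb; rewrite /N ltnS; exact: leq_add (ltnW hb) (ltnW ha).
  - move=> z; rewrite -mulcoef; [|apply: inb; lia|apply: inb; lia].
    by rewrite -exprD add1n prednK.
  - move=> z; rewrite -mulcoef; [|apply: inb; lia|apply: inb; lia].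
    by rewrite -exprD add1n.
  - by rewrite -apolar_box //; apply: inb; lia.
  - by rewrite -apolar_box //; apply: inb; lia.
  - by rewrite -apolar_box //; apply: inb; lia.
  - exact: pos.
have r0 : r 0%N = 1 by rewrite /r expr0 apolar1.
have key : forall k, (k < s)%N -> r 1%N * r k <= r k.+1.
  elim=> [|k IH] hk; first by rewrite r0 mulr1.
  have hst := step k.+1 isT (ltnW hk).
  have IH' := IH (ltnW hk).
  have pk := pos k; have pk1 := pos k.+1; have pk2 := pos k.+2; have p1 := pos 1%N.
  rewrite -(ler_pM2l pk).
  apply: le_trans hst.
  rewrite /= expr2 mulrA [r k * r 1%N]mulrC.
  by rewrite ler_wpM2r // ltW.
have pw : forall k, (k <= s)%N -> r 1%N ^+ k <= r k.
  elim=> [|k IH] hk; first by rewrite expr0 r0.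
  rewrite exprS; apply: le_trans (key k hk).
  by rewrite ler_wpM2l ?(ltW (pos 1%N)) // IH // ltnW.
rewrite /apolar_norm -(ler_pXn2r (n := 2)) // ?nnegrE ?exprn_ge0 ?sqrtr_ge0 //.
rewrite -exprM mulnC exprM sqr_sqrtr ?apolar_ge0 // sqr_sqrtr ?apolar_ge0 //.
by have := pw s (leqnn s); rewrite /r expr1.
Qed.
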